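(* Let $p$ be an odd prime, $\mathbb{F}$ a field of characteristic $p$, and $a,s$ natural numbers with $a<p$. Then, as $\mathbb{F}C$-modules, $$H^{(a^{sp})}(R_{as})\big\downarrow_C\cong\bigoplus_{\delta}K_\delta,$$ where $\delta$ runs over all set partitions of $\{1,\ldots,as\}$ into $s$ sets of size $a$.
   Context: $H^{(a^{sp})}$ is the $\mathbb{F}S_{asp}$-permutation module with basis the set partitions of $\{1,\ldots,asp\}$ into $sp$ sets of size $a$. For $j\geq1$ let $z_j=(p(j-1)+1,\ldots,pj)$ and $\mathcal{O}_j=\{p(j-1)+1,\ldots,pj\}$; $\sigma=z_1\cdots z_{as}$, $R_{as}=\langle\sigma\rangle$, and $C=\langle z_1\rangle\times\cdots\times\langle z_{as}\rangle\leq N_{S_{asp}}(R_{as})$. The Brauer quotient $H^{(a^{sp})}(R_{as})$ (fixed points of $R_{as}$ modulo relative traces from proper subgroups) is identified with the $\mathbb{F}$-span of the set partitions fixed by $R_{as}$. Given a set partition $\delta=\{\delta_1,\ldots,\delta_s\}$ of $\{1,\ldots,as\}$ into sets of size $a$, a fixed set partition $\omega$ has type $\delta$ if there are sets $A_1,\ldots,A_s$ with $|A_i\cap\mathcal{O}_j|=1$ if $j\in\delta_i$ and $0$ otherwise, such that $\omega=\{A_i\sigma^k: 1\leq i\leq s, 0\leq k\leq p-1\}$; $K_\delta$ is the subspace of $H^{(a^{sp})}(R_{as})$ spanned by the fixed set partitions of type $\delta$. *)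

(* Defs.v *)
From HB Require Import structures.
From mathcomp Require Import all_boot all_order all_algebra.
Unset Printing Implicit Defensive.
Import GRing.Theory.

(* Points {1,...,N} are represented 0-based by 'I_N, with N = a * s * p.
   The orbit O_j (1-based j) is { i : i %/ p = j-1 } (0-based). *)

(* The element of C = <z_1> x ... x <z_as> acting as z_{j+1}^{k j} on the
   (0-based) j-th orbit: i |-> (i %/ p) * p + ((i %% p + k (i %/ p)) %% p). *)
Definition cyc (p N : nat) (k : nat -> nat) (i : 'I_N) : 'I_N :=
  insubd i ((i %/ p) * p + (i %% p + k (i %/ p)) %% p).

Definition sig (p N : nat) : 'I_N -> 'I_N := cyc p N (fun _ => 1).

Definition orb (p N j : nat) : {set 'I_N} := [set i : 'I_N | (i %/ p) == j].

Definition sp_act N (g : 'I_N -> 'I_N) (w : {set {set 'I_N}}) : {set {set 'I_N}} :=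
  [set g @: B | B : {set 'I_N} in w].
Definition sp_preim N (g : 'I_N -> 'I_N) (w : {set {set 'I_N}}) : {set {set 'I_N}} :=
  [set g @^-1: B | B : {set 'I_N} in w].

Definition is_setpart N (a b : nat) (w : {set {set 'I_N}}) : bool :=
  [&& partition w [set: 'I_N], #|w| == b & [forall B in w, #|B| == a]].

(* set partitions of {1..asp} into sp sets of size a, fixed by R_{as} = <sigma> *)
Definition fixedSP (p a s : nat) (w : {set {set 'I_(a * s * p)}}) : bool :=
  is_setpart (a * s * p) a (s * p) w && (sp_act (a * s * p) (sig p (a * s * p)) w == w).

Definition has_type (p a s : nat) (d : {set {set 'I_(a * s)}})
  (w : {set {set 'I_(a * s * p)}}) : bool :=
  [exists A : {ffun {set 'I_(a * s)} -> {set 'I_(a * s * p)}},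
     [forall D in d, forall j : 'I_(a * s),
        #|A D :&: orb p (a * s * p) j| == (j \in D : nat)]
     && (w == [set (iter k (sig p (a * s * p))) @: A D | D : {set 'I_(a * s)} in d, k : 'I_p in [set: 'I_p]])].

(* The ambient permutation-module coordinates: F-valued functions on subsets
   of subsets of {1..asp}; the Brauer quotient is identified with the span of
   the basis vectors of fixed set partitions. *)
Definition Wsp (F : fieldType) (N : nat) := {ffun {set {set 'I_N}} -> F^o}.

Definition bvec (F : fieldType) N (w : {set {set 'I_N}}) : Wsp F N :=
  [ffun x => ((x == w)%:R)%R].

Definition Hfix (F : fieldType) (p a s : nat) : {vspace Wsp F (a * s * p)} :=
  (<<[seq bvec F (a * s * p) w | w <- enum [pred w | fixedSP p a s w]]>>)%VS.

Definition Kdelta (F : fieldType) (p a s : nat) (d : {set {set 'I_(a * s)}})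
  : {vspace Wsp F (a * s * p)} :=
  (<<[seq bvec F (a * s * p) w | w <- enum [pred w | fixedSP p a s w && has_type p a s d w]]>>)%VS.

Definition Deltas (a s : nat) : {set {set {set 'I_(a * s)}}} :=
  [set d | is_setpart (a * s) a s d].

Definition actC (F : fieldType) (p a s : nat) (k : nat -> nat)
  (v : Wsp F (a * s * p)) : Wsp F (a * s * p) :=
  [ffun w => v (sp_preim (a * s * p) (cyc p (a * s * p) k) w)].

(* Main.v *)
Require Import Defs.
From HB Require Import structures.
From mathcomp Require Import all_boot all_order all_algebra zify.
Import GRing.Theory.
Set Implicit Arguments. Unset Strict Implicit.

Lemma blk_lt m p (i : 'I_(m * p)) : i %/ p < m.
Proof.
case: p i => [|p] i; first by case: i; rewrite muln0.
by rewrite ltn_divLR.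
Qed.

Lemma cyc_val m p k (i : 'I_(m * p)) :
  val (cyc p (m * p) k i) = (i %/ p) * p + (i %% p + k (i %/ p)) %% p.
Proof.
case: p i k => [|p] i k; first by case: i; rewrite muln0.
rewrite /cyc val_insubd ifT //.
have h1 := blk_lt i.
have h2 : (i %% p.+1 + k (i %/ p.+1)) %% p.+1 < p.+1 by rewrite ltn_mod.
have h3 : (i %/ p.+1).+1 * p.+1 <= m * p.+1 by rewrite leq_mul2r h1 orbT.
rewrite mulSn in h3; lia.
Qed.

Lemma cyc_div m p k (i : 'I_(m * p)) : cyc p (m * p) k i %/ p = i %/ p.
Proof.
case: p i k => [|p] i k; first by case: i; rewrite muln0.
by rewrite cyc_val divnMDl // (divn_small (ltn_pmod _ _)) ?addn0.
Qed.

Lemma cyc_mod m p k (i : 'I_(m * p)) :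
  cyc p (m * p) k i %% p = (i %% p + k (i %/ p)) %% p.
Proof. by rewrite cyc_val modnMDl modn_mod. Qed.

Lemma ord_dm m p (x y : 'I_(m * p)) : x %/ p = y %/ p -> x %% p = y %% p -> x = y.
Proof. by move=> h1 h2; apply: val_inj; rewrite /= (divn_eq x p) (divn_eq y p) h1 h2. Qed.

Lemma cyc_inj m p k : injective (cyc p (m * p) k).
Proof.
move=> x y h.
have hd : x %/ p = y %/ p by move: (cyc_div k x) (cyc_div k y); rewrite h => <- <-.
apply: ord_dm => //.
have := congr1 (fun z : 'I_(m * p) => val z %% p) h; rewrite /= !cyc_mod hd.
by move/eqP; rewrite eqn_modDr !modn_mod => /eqP.
Qed.

Lemma cycC m p k k' (x : 'I_(m * p)) :
  cyc p (m * p) k (cyc p (m * p) k' x) = cyc p (m * p) k' (cyc p (m * p) k x).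
Proof.
apply: ord_dm; first by rewrite !cyc_div.
by rewrite !cyc_mod !cyc_div !modnDml addnAC.
Qed.

Lemma iter_sig m p n (x : 'I_(m * p)) :
  iter n (sig p (m * p)) x = cyc p (m * p) (fun _ => n) x.
Proof.
elim: n => [|n IH].
  by apply: ord_dm; rewrite ?cyc_div // cyc_mod addn0 modn_mod.
rewrite iterS IH /sig; apply: ord_dm; first by rewrite !cyc_div.
by rewrite !cyc_mod ?cyc_div /= modnDml -addnA addn1.
Qed.

Lemma same_blk m p (x y : 'I_(m * p)) : x %/ p = y %/ p ->
  y = iter ((y %% p + (p - x %% p)) %% p) (sig p (m * p)) x.
Proof.
case: p x y => [|p] x y; first by have := ltn_ord x; rewrite [in X in _ < X]muln0.
move=> h; rewrite iter_sig; apply: ord_dm; first by rewrite cyc_div.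
rewrite cyc_mod modnDmr.
have hx : x %% p.+1 < p.+1 by rewrite ltn_mod.
have -> : x %% p.+1 + (y %% p.+1 + (p.+1 - x %% p.+1)) = y %% p.+1 + p.+1 by lia.
by rewrite modnDr modn_mod.
Qed.

Lemma preim_img (T : finType) (g : T -> T) (B : {set T}) :
  injective g -> g @^-1: (g @: B) = B.
Proof.
move=> gi; apply/setP => x; rewrite inE.
apply/imsetP/idP => [[y hy /gi ->] //|hx]; by exists x.
Qed.

Lemma img_preim (T : finType) (g : T -> T) (B : {set T}) :
  injective g -> g @: (g @^-1: B) = B.
Proof.
move=> gi; apply/setP => x.
apply/imsetP/idP => [[y]|hx]; first by rewrite inE => hy ->.
by exists (finv g x); rewrite ?inE f_finv.
Qed.

Lemma trivIset_eq (T : finType) (P : {set {set T}}) :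
  (forall A B x, A \in P -> B \in P -> x \in A -> x \in B -> A = B) -> trivIset P.
Proof.
move=> h; apply/trivIsetP => A B hA hB neq.
rewrite -setI_eq0; apply/eqP/setP => x; rewrite !inE.
apply/negbTE/negP => /andP [xA xB]; move/eqP: neq; apply; exact: h xA xB.
Qed.

Lemma blk_same (T : finType) (P : {set {set T}}) A B x :
  trivIset P -> A \in P -> B \in P -> x \in A -> x \in B -> A = B.
Proof. by move=> t hA hB xA xB; rewrite -(def_pblock t hA xA) (def_pblock t hB xB). Qed.

Lemma setpart_img N (g : 'I_N -> 'I_N) a b (w : {set {set 'I_N}}) :
  injective g -> is_setpart N a b w -> is_setpart N a b (sp_act N g w).
Proof.
move=> gi /and3P [/and3P [/eqP cw tw nw] /eqP cardw /forall_inP sz].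
have ii : injective (fun B : {set 'I_N} => g @: B).
  by move=> B1 B2 h; rewrite -(preim_img B1 gi) h preim_img.
apply/and3P; split.
- apply/and3P; split.
  + apply/eqP/setP => x; rewrite inE; apply/bigcupP.
    have : finv g x \in cover w by rewrite cw.
    case/bigcupP => B hB hx; exists (g @: B); first exact: imset_f.
    by rewrite -[x](f_finv gi); apply: imset_f.
  + apply: trivIset_eq => A' B' x /imsetP [A hA ->] /imsetP [B hB ->].
    case/imsetP => y hy -> /imsetP [z hz /gi yz]; subst z.
    by rewrite (blk_same tw hA hB hy hz).
  + apply/negP => /imsetP [B hB] /esym /eqP; rewrite imset_eq0 => /eqP h.
    by move: nw; rewrite -h hB.
- by rewrite /sp_act card_imset // cardw.
- apply/forall_inP => B' /imsetP [B hB ->]; rewrite card_imset //; exact: sz.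
Qed.

Lemma mod_cancel p k c n1 n2 : prime p -> 0 < k < p -> n1 < p -> n2 < p ->
  (c + n1 * k) %% p = (c + n2 * k) %% p -> n1 = n2.
Proof.
move=> pp /andP [k0 kp].
wlog le12 : n1 n2 / n1 <= n2.
  move=> H h1 h2 e; case: (leqP n1 n2) => l; first exact: H.
  by apply/esym/H => //; apply: ltnW.
move=> h1 h2 e.
have e2 : (c + n1 * k) + (n2 - n1) * k = (c + n2 * k).
  by rewrite -addnA -mulnDl subnKC.
move: e; rewrite -e2 => /eqP; rewrite -{1}[c + n1 * k]addn0 eqn_modDl mod0n.
rewrite eq_sym -/(dvdn p _) Euclid_dvdM // => /orP [] hd.
  have : n2 - n1 < p by lia.
  case e0 : (n2 - n1) => [|q]; first by lia.
  by move=> /leq_trans; rewrite e0 in hd; move=> /(_ _ (dvdn_leq _ hd)); rewrite ltnn => /(_ isT).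
by have := dvdn_leq k0 hd; rewrite leqNgt kp.
Qed.

Definition blk m p (x : 'I_(m * p)) : 'I_m := Ordinal (blk_lt x).
Definition supp m p (B : {set 'I_(m * p)}) : {set 'I_m} := [set blk x | x in B].

Lemma blk_cyc m p k (x : 'I_(m * p)) : blk (cyc p (m * p) k x) = blk x.
Proof. by apply: val_inj; rewrite /= cyc_div. Qed.

Lemma supp_cyc m p k (B : {set 'I_(m * p)}) : supp (cyc p (m * p) k @: B) = supp B.
Proof. by rewrite /supp -imset_comp; apply: eq_imset => x /=; rewrite blk_cyc. Qed.

Lemma supp_iter m p n (B : {set 'I_(m * p)}) : supp (iter n (sig p (m * p)) @: B) = supp B.
Proof. by rewrite -(supp_cyc (fun _ => n) B); congr supp; apply: eq_imset => x; rewrite iter_sig. Qed.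

Lemma fix_iter m p (w : {set {set 'I_(m * p)}}) B n :
  sp_act (m * p) (sig p (m * p)) w = w -> B \in w -> iter n (sig p (m * p)) @: B \in w.
Proof.
move=> hf hB; elim: n => [|n IH].
  by rewrite (eq_imset (g := id)) // imset_id.
rewrite (eq_imset (g := sig p (m * p) \o iter n (sig p (m * p)))) //.
by rewrite imset_comp -hf; apply: imset_f.
Qed.

Lemma fix_inj m p (w : {set {set 'I_(m * p)}}) B x y : prime p ->
  partition w [set: 'I_(m * p)] -> (forall B, B \in w -> #|B| < p) ->
  sp_act (m * p) (sig p (m * p)) w = w -> B \in w -> x \in B -> y \in B ->
  x %/ p = y %/ p -> x = y.
Proof.
move=> pp /and3P [_ tw _] hsz hf hB hx hy hxy.
set k := (y %% p + (p - x %% p)) %% p.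
have ey := same_blk hxy; rewrite -/k in ey.
have p0 := prime_gt0 pp.
case k0 : k => [|k']; first by rewrite ey k0.
have kp : k < p by rewrite ltn_pmod.
have hB' := fix_iter k hf hB.
have eB : iter k (sig p (m * p)) @: B = B.
  by apply: (blk_same tw hB' hB) (hy); rewrite ey; apply: imset_f.
exfalso.
have cl : forall n, iter (n * k) (sig p (m * p)) x \in B.
  elim => [|n IH]; first by [].
  by rewrite mulSn iterD -eB; apply: imset_f.
have hc : #|[set iter (val n * k) (sig p (m * p)) x | n : 'I_p]| = p.
    rewrite card_imset ?card_ord // => n1 n2 /(congr1 (fun z : 'I_(m * p) => val z %% p)).
    rewrite /= !iter_sig !cyc_mod => e; apply: val_inj.
    apply: (mod_cancel (k := k) (c := x %% p) pp) => //; first by rewrite k0 /= -k0.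
    - exact: (ltn_ord n1).
    - exact: (ltn_ord n2).
have : #|[set iter (val n * k) (sig p (m * p)) x | n : 'I_p]| <= #|B|.
  by apply: subset_leq_card; apply/subsetP => z /imsetP [n _ ->].
by rewrite hc leqNgt hsz.
Qed.

Lemma orbit_blk m p (w : {set {set 'I_(m * p)}}) B B' x y :
  partition w [set: 'I_(m * p)] -> sp_act (m * p) (sig p (m * p)) w = w ->
  B \in w -> B' \in w -> x \in B -> y \in B' -> x %/ p = y %/ p ->
  exists2 k, k < p & B' = iter k (sig p (m * p)) @: B.
Proof.
move=> /and3P [_ tw _] hf hB hB' hx hy hxy.
have p0 : 0 < p by case: (posnP p) => // p0; move: (ltn_ord x); rewrite [in X in _ < X]p0 muln0.
exists ((y %% p + (p - x %% p)) %% p); first by rewrite ltn_pmod.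
apply: (blk_same tw hB' (fix_iter _ hf hB) hy).
by rewrite {1}(same_blk hxy); apply: imset_f.
Qed.

Lemma supp_card m p (w : {set {set 'I_(m * p)}}) B : prime p ->
  partition w [set: 'I_(m * p)] -> (forall B, B \in w -> #|B| < p) ->
  sp_act (m * p) (sig p (m * p)) w = w -> B \in w -> #|supp B| = #|B|.
Proof.
move=> pp hw hsz hf hB; rewrite card_in_imset // => x y hx hy /(congr1 val) /= e.
exact: (fix_inj pp hw hsz hf hB hx hy e).
Qed.

Lemma blk_orb m p (x : 'I_(m * p)) (j : 'I_m) : (x \in orb p (m * p) j) = (blk x == j).
Proof. by rewrite inE -(inj_eq val_inj). Qed.

Lemma fixed_type p a s (w : {set {set 'I_(a * s * p)}}) : prime p -> a < p ->
  fixedSP p a s w -> exists2 d, d \in Deltas a s & has_type p a s d w.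
Proof.
move=> pp ap /andP [/and3P [hw /eqP cardw /forall_inP sz] /eqP hf].
have p0 := prime_gt0 pp.
have hsz : forall B, B \in w -> #|B| < p by move=> B /sz /eqP ->.
have szB : forall B, B \in w -> #|B| = a by move=> B /sz /eqP.
move: (hw) => /and3P [/eqP cw tw nw].
set d := [set supp B | B in w].
have ne : forall B, B \in w -> exists x, x \in B.
  move=> B hB; case: (set_0Vmem B) => [e|[x hx]]; last by exists x.
  by move: nw; rewrite -e hB.
have dpart : partition d [set: 'I_(a * s)].
  apply/and3P; split.
  - apply/eqP/setP => j; rewrite in_setT; apply/bigcupP.
    have jp : j * p < a * s * p by rewrite ltn_mul2r p0 ltn_ord.
    have : Ordinal jp \in cover w by rewrite cw in_setT.
    case/bigcupP => B hB hx; exists (supp B); first exact: imset_f.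
    apply/imsetP; exists (Ordinal jp) => //; apply: val_inj => /=; by rewrite mulnK.
  - apply: trivIset_eq => D1 D2 j /imsetP [B1 h1 ->] /imsetP [B2 h2 ->].
    case/imsetP => x1 hx1 -> /imsetP [x2 hx2 /(congr1 val) /= e].
    have [k _ ->] := orbit_blk hw hf h1 h2 hx1 hx2 e.
    by rewrite supp_iter.
  - apply/negP => /imsetP [B hB] /esym /eqP; rewrite imset_eq0 => /eqP e.
    by move: nw; rewrite -e hB.
have hA : forall D, D \in d -> exists2 B, B \in w & supp B = D.
  by move=> D /imsetP [B hB ->]; exists B.
set A := [ffun D => odflt set0 [pick B in w | supp B == D]].
have hAD : forall D, D \in d -> A D \in w /\ supp (A D) = D.
  move=> D /hA [B hB e]; rewrite /A ffunE; case: pickP => [B' /andP [h1 /eqP h2]|/(_ B)] //=.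
  by rewrite hB e eqxx.
exists d.
  rewrite inE; apply/and3P; split => //.
  - have := card_partition dpart; rewrite cardsT card_ord.
    under eq_bigr => D /imsetP [B hB ->] do rewrite (supp_card pp hw hsz hf hB) szB //.
    rewrite sum_nat_const => e.
    case: (posnP a) => a0.
      have w0 : w = set0.
        apply/setP => B; rewrite inE; apply/negP => hB.
        by have [x hx] := ne B hB; move: (szB B hB) => /eqP; rewrite [X in _ == X]a0 cards_eq0 => /eqP e0; rewrite e0 inE in hx.
      move: cardw; rewrite w0 cards0 => /esym /eqP; rewrite muln_eq0 (gtn_eqF p0) orbF => /eqP s0.
      by rewrite [X in _ == X]s0 /d w0 imset0 cards0.
    by rewrite eq_sym -(eqn_pmul2r a0) -e mulnC.
  - apply/forall_inP => D /imsetP [B hB ->]; by rewrite (supp_card pp hw hsz hf hB) szB.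
apply/existsP; exists A; apply/andP; split.
  apply/forall_inP => D hD; apply/forallP => j.
  have [h1 h2] := hAD D hD.
  case: (boolP (j \in D)) => jD /=.
    move: (jD); rewrite -{1}h2 => /imsetP [x hx ex].
    suff -> : A D :&: orb p (a * s * p) j = [set x] by rewrite cards1.
    apply/setP => y; rewrite !inE; apply/andP/eqP => [[hy /eqP hj]|->].
      apply: (fix_inj pp hw hsz hf h1 hy hx); by rewrite hj ex.
    by rewrite hx ex.
  suff -> : A D :&: orb p (a * s * p) j = set0 by rewrite cards0.
  apply/setP => y; rewrite !inE; apply/negP => /andP [hy /eqP hj].
  move/negP: jD; apply; rewrite -h2; apply/imsetP; exists y => //; by apply: val_inj.
apply/eqP/setP => B; apply/idP/imset2P => [hB|].
  have hD : supp B \in d by apply: imset_f.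
  have [h1 h2] := hAD _ hD.
  have [x hx] := ne B hB.
  have : blk x \in supp (A (supp B)) by rewrite h2; apply: imset_f.
  case/imsetP => y hy /(congr1 val) /= e.
  have [k kp ->] := orbit_blk hw hf h1 hB hy hx (esym e).
  by exists (supp B) (Ordinal kp); rewrite ?in_setT.
case=> D k hD _ ->; exact: fix_iter _ hf (proj1 (hAD D hD)).
Qed.

Lemma type_supp p a s d (w : {set {set 'I_(a * s * p)}}) : 0 < p ->
  has_type p a s d w -> d = [set supp B | B in w].
Proof.
move=> p0 /existsP [A /andP [/forall_inP hc /eqP ->]].
have sA : forall D, D \in d -> supp (A D) = D.
  move=> D hD; apply/setP => j; move/forallP: (hc D hD) => /(_ j).
  case: (boolP (j \in D)) => jD /= /eqP e.
    have : A D :&: orb p (a * s * p) j != set0 by rewrite -card_gt0 e.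
    case/set0Pn => x; rewrite inE blk_orb => /andP [hx /eqP <-]; exact: imset_f.
  apply/negP => /imsetP [x hx ej].
  have : x \in A D :&: orb p (a * s * p) j by rewrite inE hx blk_orb ej eqxx.
  move=> hx2; have : 0 < #|A D :&: orb p (a * s * p) j| by apply/card_gt0P; exists x.
  by rewrite e.
apply/setP => D; apply/idP/imsetP => [hD|[B /imset2P [D' k hD' _ ->] ->]].
  exists (iter 0 (sig p (a * s * p)) @: A D); last by rewrite supp_iter sA.
  by apply/imset2P; exists D (Ordinal p0); rewrite ?in_setT.
by rewrite supp_iter sA.
Qed.

Lemma comm_img m p k n (X : {set 'I_(m * p)}) :
  cyc p (m * p) k @: (iter n (sig p (m * p)) @: X) =
  iter n (sig p (m * p)) @: (cyc p (m * p) k @: X).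
Proof.
rewrite -!imset_comp; apply: eq_imset => x /=; by rewrite !iter_sig cycC.
Qed.

Lemma act_fixed p a s k (w : {set {set 'I_(a * s * p)}}) :
  fixedSP p a s w -> fixedSP p a s (sp_act (a * s * p) (cyc p (a * s * p) k) w).
Proof.
move=> /andP [hs /eqP hf]; apply/andP; split; first exact: setpart_img (@cyc_inj _ _ _) hs.
apply/eqP; rewrite {2}/sp_act -{2}hf /sp_act -!imset_comp.
apply: eq_imset => B /=.
have := comm_img k 1 B; rewrite (eq_imset (g := sig p (a * s * p)) (f := iter 1 _)) // => ->.
Qed.

Lemma act_type p a s k d (w : {set {set 'I_(a * s * p)}}) :
  has_type p a s d w -> has_type p a s d (sp_act (a * s * p) (cyc p (a * s * p) k) w).
Proof.
set g := cyc p (a * s * p) k.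
move=> /existsP [A /andP [/forall_inP hc /eqP ->]].
apply/existsP; exists [ffun D => g @: A D]; apply/andP; split.
  apply/forall_inP => D hD; apply/forallP => j; rewrite ffunE.
  have -> : g @: A D :&: orb p (a * s * p) j = g @: (A D :&: orb p (a * s * p) j).
    apply/setP => y; rewrite inE; apply/andP/imsetP => [[/imsetP [x hx ->]]|[x]].
      by rewrite !blk_orb blk_cyc => hj; exists x; rewrite // inE hx blk_orb.
    by rewrite inE blk_orb => /andP [hx hj] ->; rewrite blk_orb blk_cyc hj imset_f.
  by rewrite card_imset; [exact: (forallP (hc D hD) j)|exact: cyc_inj].
apply/eqP/setP => C; apply/imsetP/imset2P => [[B /imset2P [D k' hD hk ->] ->]|[D k' hD hk ->]].
  by exists D k' => //; rewrite ffunE comm_img.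
exists (iter k' (sig p (a * s * p)) @: A D); first by apply/imset2P; exists D k'.
by rewrite ffunE comm_img.
Qed.
Local Open Scope ring_scope.

Lemma span_lin (K : fieldType) (V : vectType K) (f : V -> V) (X : seq V) (U : {vspace V}) :
  (forall u v, f (u + v) = f u + f v) -> (forall c u, f (c *: u) = c *: f u) ->
  {in X, forall x, f x \in U} -> forall v, v \in <<X>>%VS -> f v \in U.
Proof.
move=> fD fZ hX v hv.
have f0 : f 0 = 0 by have := fZ 0 0; rewrite !scale0r.
rewrite (@coord_span _ _ _ (in_tuple X) v hv).
rewrite (big_morph f fD f0); apply: memv_suml => i _; rewrite fZ; apply: memvZ.
by apply: hX; apply: mem_nth.
Qed.

Lemma bvec_supp (F : fieldType) N (P : pred {set {set 'I_N}}) (v : Wsp F N) :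
  v \in <<[seq bvec F N w | w <- enum P]>>%VS -> forall x, ~~ P x -> v x = 0.
Proof.
set X := [seq bvec F N w | w <- enum P].
move=> hv x nx; rewrite (@coord_span _ _ _ (in_tuple X) v hv) sum_ffunE.
apply: big1 => i _; rewrite ffunE.
have ip : (i < size X)%N by [].
rewrite /X (nth_map set0) -?(size_map (bvec F N)) // ffunE.
case: eqP => [e|]; last by rewrite scaler0.
have : nth set0 (enum P) i \in enum P by rewrite mem_nth // -(size_map (bvec F N)).
rewrite mem_enum -e; move: nx; rewrite /in_mem /=; by move=> /negbTE ->.
Qed.

Lemma sp_cancel1 N (g : 'I_N -> 'I_N) w : injective g -> sp_preim N g (sp_act N g w) = w.
Proof.
move=> gi; rewrite /sp_preim /sp_act -imset_comp (eq_imset (g := id)) ?imset_id //.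
by move=> B /=; rewrite preim_img.
Qed.

Lemma sp_cancel2 N (g : 'I_N -> 'I_N) w : injective g -> sp_act N g (sp_preim N g w) = w.
Proof.
move=> gi; rewrite /sp_preim /sp_act -imset_comp (eq_imset (g := id)) ?imset_id //.
by move=> B /=; rewrite img_preim.
Qed.

Unset Implicit Arguments.
Theorem proposition3p4 (p : nat) (F : fieldType) (a s : nat) :
  prime p -> odd p -> p \in [pchar F] -> (a < p)%N ->
  [/\ Hfix F p a s = (\sum_(d in Deltas a s) Kdelta F p a s d)%VS,
      directv (\sum_(d in Deltas a s) Kdelta F p a s d)%VS
    & forall (k : nat -> nat) d, d \in Deltas a s ->
        forall v, v \in Kdelta F p a s d -> actC F p a s k v \in Kdelta F p a s d].
Proof.
move=> pp _ _ ap; have p0 := prime_gt0 pp; split.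
- apply/eqP; rewrite eqEsubv; apply/andP; split.
    apply/span_subvP => v /mapP [w hw ->]; rewrite mem_enum inE in hw.
    have [d hd ht] := fixed_type pp ap hw.
    apply: (subvP (sumv_sup d hd (subvv _))).
    by apply: memv_span; apply: map_f; rewrite mem_enum inE hw ht.
  apply/subv_sumP => d hd; apply/span_subvP => v /mapP [w hw ->].
  rewrite mem_enum inE in hw; case/andP: hw => hw _.
  by apply: memv_span; apply: map_f; rewrite mem_enum inE hw.
- apply/directv_sum_independent => us hus hsum d hd.
  apply/ffunP => w; rewrite [RHS]ffunE.
  case: (boolP (fixedSP p a s w && has_type p a s d w)) => hw; last first.
    by apply: (bvec_supp (hus d hd)).
  have := congr1 (fun f : Wsp F (a * s * p) => f w) hsum; rewrite /= sum_ffunE (bigD1 d) //= big1 ?addr0.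
    by move=> ->; rewrite ffunE.
  move=> d' /andP [hd' ne]; apply: (bvec_supp (hus d' hd')).
  apply/negP => /andP [_ ht']; case/andP: hw => _ ht.
  by move/negP: ne; apply; rewrite (type_supp p0 ht) (type_supp p0 ht').
- move=> k d hd v hv; apply: (span_lin (f := actC F p a s k)) hv.
  + by move=> u v'; apply/ffunP => x; rewrite !ffunE.
  + by move=> c u; apply/ffunP => x; rewrite !ffunE.
  move=> x /mapP [w hw ->]; rewrite mem_enum inE in hw; case/andP: hw => hw ht.
  have -> : actC F p a s k (bvec F (a * s * p) w) =
            bvec F (a * s * p) (sp_act (a * s * p) (cyc p (a * s * p) k) w).
    apply/ffunP => y; rewrite !ffunE.
    have E : (sp_preim (a * s * p) (cyc p (a * s * p) k) y == w) =
             (y == sp_act (a * s * p) (cyc p (a * s * p) k) w).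
      apply/idP/idP => /eqP e; apply/eqP; [rewrite -e sp_cancel2|rewrite e sp_cancel1] => //; exact: cyc_inj.
    by rewrite E.
  apply: memv_span; apply: map_f; rewrite mem_enum inE.
  by rewrite act_fixed // act_type.
Qed.
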